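(* In the setting below, suppose $p,q\geq5$. Then for all distinct $i,j,k\in\mathbb Z/N\mathbb Z$ we have $P_{ij}\subset P^+_{jk}$ and $Q_{ij}\subset Q^+_{jk}$.
   Context: Setting: $p,q$ distinct primes, $N=p+q$; $M=(m_{ik})_{i,k\in\mathbb Z/N\mathbb Z}$ has entries in $\mathbb Z/pq\mathbb Z$ and $(e^{2\pi i\,m_{ik}/pq})$ is a complex Hadamard matrix (unimodular entries, orthogonal rows). $L_i(k)=m_{ik}$, $L_{ij}=L_j-L_i$. For $d\mid pq$, $d(\mathbb Z/pq\mathbb Z)$ is the subgroup of multiples of $d$. For distinct $i,j$ there is a partition $\mathbb Z/N\mathbb Z=P_{ij}\sqcup Q_{ij}\sqcup R_{ij}$ and $r\in\mathbb Z/pq\mathbb Z$ with: $\#R_{ij}=2$ and $L_{ij}\equiv r$ on $R_{ij}$; $\#P_{ij}=p-1$ and $L_{ij}(P_{ij})=(r+q(\mathbb Z/pq\mathbb Z))\setminus\{r\}$; $\#Q_{ij}=q-1$ and $L_{ij}(Q_{ij})=(r+p(\mathbb Z/pq\mathbb Z))\setminus\{r\}$. This partition is unique ($R_{ij}$ is the pair of indices where $L_{ij}$ takes its unique repeated value). Put $P^+_{ij}=P_{ij}\cup R_{ij}$, $Q^+_{ij}=Q_{ij}\cup R_{ij}$. *)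

(* Defs.v *)
From HB Require Import structures.
From mathcomp Require Import all_boot all_order all_algebra all_field.
Set Implicit Arguments. Unset Strict Implicit. Unset Printing Implicit Defensive.
Import Order.TTheory GRing.Theory Num.Theory.
Local Open Scope ring_scope.

(* e^{2 pi i / n} in algC: n.-root(-1) is the root of -1 with minimal
   non-negative argument, i.e. e^{i pi / n}; its square is e^{2 pi i/n}. *)
Definition zeta (n : nat) : algC := (n.-root (-1)) ^+ 2.

Section Setting.
Variables p q : nat.
(* indices: Z/NZ with N = p+q, represented by 'I_(p+q);
   entries: Z/pqZ represented by 'Z_(p*q) (pq >= 6 here). *)
Definition mat := 'M['Z_(p * q)]_(p + q).

(* The matrix (e^{2 pi i m_ik / pq}) has pairwise orthogonal rows
   (its entries are automatically unimodular). *)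
Definition hadamard_exp (M : mat) : Prop :=
  forall i j : 'I_(p + q), i != j ->
    \sum_(k < p + q) zeta (p * q) ^+ (M i k : nat)
                      * (zeta (p * q) ^+ (M j k : nat))^* = 0.

Definition Ldiff (M : mat) (i j k : 'I_(p + q)) : 'Z_(p * q) := M j k - M i k.

Definition multiple_of (d : nat) (x : 'Z_(p * q)) : bool :=
  [exists y : 'Z_(p * q), x == d%:R * y].

Definition Rset (M : mat) (i j : 'I_(p + q)) : {set 'I_(p + q)} :=
  [set k | [exists k', (k' != k) && (Ldiff M i j k' == Ldiff M i j k)]].

(* P_ij: indices outside R_ij with L_ij(k) in r + q(Z/pqZ), r the value on R_ij *)
Definition Pset (M : mat) (i j : 'I_(p + q)) : {set 'I_(p + q)} :=
  [set k | (k \notin Rset M i j) &&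
     [exists k0 in Rset M i j, multiple_of q (Ldiff M i j k - Ldiff M i j k0)]].

Definition Qset (M : mat) (i j : 'I_(p + q)) : {set 'I_(p + q)} :=
  [set k | (k \notin Rset M i j) &&
     [exists k0 in Rset M i j, multiple_of p (Ldiff M i j k - Ldiff M i j k0)]].

Definition Pplus (M : mat) (i j : 'I_(p + q)) := Pset M i j :|: Rset M i j.
Definition Qplus (M : mat) (i j : 'I_(p + q)) := Qset M i j :|: Rset M i j.
End Setting.

(* Main.v *)
Require Import Defs.
From HB Require Import structures.
From mathcomp Require Import all_boot all_order all_algebra all_field.
Import Order.TTheory GRing.Theory Num.Theory.
From mathcomp Require Import ring zify.

Set Implicit Arguments. Unset Strict Implicit. Unset Printing Implicit Defensive.
Module CombM.
Local Open Scope ring_scope.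

Section Comb.
Variables (V : comNzRingType) (I : finType) (mA mB : pred V).
Hypotheses (A0 : mA 0) (AB : forall x y, mA x -> mA y -> mA (x - y)).
Hypotheses (B0 : mB 0) (BB : forall x y, mB x -> mB y -> mB (x - y)).
Hypothesis crt : forall x, mA x -> mB x -> x = 0.

Lemma AD x y : mA x -> mA y -> mA (x + y).
Proof. move=> hx hy; have := AB hx (AB A0 hy); by rewrite sub0r opprK. Qed.
Lemma BD x y : mB x -> mB y -> mB (x + y).
Proof. move=> hx hy; have := BB hx (BB B0 hy); by rewrite sub0r opprK. Qed.

Definition PB (g : I -> V) r := [set t | (g t != r) && mB (g t - r)].
Definition PA (g : I -> V) r := [set t | (g t != r) && mA (g t - r)].
Definition Cross (g : I -> V) (r : V) :=
  [/\ forall t, (mA (g t - r)) || (mB (g t - r)),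
      forall t t', t != t' -> g t = g t' -> g t = r,
      exists t1 t2, [/\ t1 != t2, g t1 = r & g t2 = r],
      (4 <= #|PB g r|)%N & (4 <= #|PA g r|)%N].

Lemma eqAB u v (ha : mA (u - v)) (hb : mB (u - v)) : u = v.
Proof. by apply/eqP; rewrite -subr_eq0 (crt ha hb). Qed.

Lemma key (x y z : I -> V) rx ry rz :
  (forall t, x t = y t - z t) -> Cross x rx -> Cross y ry -> Cross z rz ->
  forall t, x t != rx -> mB (x t - rx) ->
    (mB (y t - ry) && mB (z t - rz)) \/
    [/\ y t != ry, mA (y t - ry), z t != rz & mA (z t - rz)].
Proof.
move=> hx [_ xinj _ xsz _] [ycov yinj _ _ _] [zcov zinj _ _ _].
have nB (g : I -> V) r t : (forall t, mA (g t - r) || mB (g t - r)) ->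
    ~~ mB (g t - r) -> g t != r /\ mA (g t - r).
  move=> cov nb; split; first by apply: contra nb => /eqP ->; rewrite subrr.
  by have := cov t; rewrite (negbTE nb) orbF.
have [t0 Pt0 /andP[By0 Bz0]] : exists2 t0, t0 \in PB x rx
     & mB (y t0 - ry) && mB (z t0 - rz).
  apply/exists_inP; apply: contraLR xsz; rewrite negb_exists_in => /forall_inP hn.
  rewrite -ltnNge.
  set P := PB x rx.
  pose E1 := [set t in P | mB (y t - ry) && ~~ mB (z t - rz)].
  pose E2 := [set t in P | ~~ mB (y t - ry) && mB (z t - rz)].
  pose E3 := [set t in P | ~~ mB (y t - ry) && ~~ mB (z t - rz)].
  have sub : P \subset E1 :|: E2 :|: E3.
    apply/subsetP => t tP; have := hn t tP; move: tP; rewrite !inE => -> /=.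
    by case: (mB (y t - ry)); case: (mB (z t - rz)).
  have c1 : (#|E1| <= 1)%N.
    apply/card_le1_eqP => t t'; rewrite !inE => /and3P[/andP[nt Bt] By nBz]
        /and3P[/andP[nt' Bt'] By' nBz'].
    have [nzt Azt] := nB _ _ _ zcov nBz; have [nzt' Azt'] := nB _ _ _ zcov nBz'.
    have e : z t = z t'.
      apply: eqAB.
        by have := AB Azt Azt'; congr mA; ring.
      have := BB (BB By By') (BB Bt Bt'); congr mB.
      have hz u : z u = y u - x u by rewrite hx; ring.
      rewrite !hz; ring.
    apply/eqP; apply: contraT => ne; by rewrite (zinj _ _ ne (esym e)) eqxx in nzt'.
  have c2 : (#|E2| <= 1)%N.
    apply/card_le1_eqP => t t'; rewrite !inE => /and3P[/andP[nt Bt] nBy Bz]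
        /and3P[/andP[nt' Bt'] nBy' Bz'].
    have [nyt Ayt] := nB _ _ _ ycov nBy; have [nyt' Ayt'] := nB _ _ _ ycov nBy'.
    have e : y t = y t'.
      apply: eqAB.
        by have := AB Ayt Ayt'; congr mA; ring.
      have := BD (BB Bz Bz') (BB Bt Bt'); congr mB.
      have hy u : y u = x u + z u by rewrite hx; ring.
      rewrite !hy; ring.
    apply/eqP; apply: contraT => ne; by rewrite (yinj _ _ ne (esym e)) eqxx in nyt'.
  have c3 : (#|E3| <= 1)%N.
    apply/card_le1_eqP => t t'; rewrite !inE => /and3P[/andP[nt Bt] nBy nBz]
        /and3P[/andP[nt' Bt'] nBy' nBz'].
    have [_ Ayt] := nB _ _ _ ycov nBy; have [_ Ayt'] := nB _ _ _ ycov nBy'.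
    have [_ Azt] := nB _ _ _ zcov nBz; have [_ Azt'] := nB _ _ _ zcov nBz'.
    have e : x t = x t'.
      apply: eqAB; last by have := BB Bt Bt'; congr mB; ring.
      have := AB (AB Ayt Ayt') (AB Azt Azt'); congr mA.
      rewrite !hx; ring.
    apply/eqP; apply: contraT => ne; by rewrite (xinj _ _ ne (esym e)) eqxx in nt'.
  apply: leq_ltn_trans (subset_leq_card sub) _.
  apply: leq_ltn_trans (leq_card_setU _ _) _.
  apply: (@leq_ltn_trans (1 + 1 + 1)%N); last by [].
  apply: leq_add; last exact: c3.
  apply: leq_trans (leq_card_setU _ _) _.
  exact: leq_add.
move: Pt0; rewrite inE => /andP[_ Bx0].
have BK : mB (rx + rz - ry).
  have := BB (BB By0 Bx0) Bz0; congr mB; rewrite hx; ring.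
move=> t nxt Bxt.
case Byt : (mB (y t - ry)); case Bzt : (mB (z t - rz)); [by left | | | ].
- exfalso; move: Bzt => /negbT /negP; apply.
  have := BB (BB Byt Bxt) BK; congr mB.
  have hz u : z u = y u - x u by rewrite hx; ring.
  rewrite hz; ring.
- exfalso; move: Byt => /negbT /negP; apply.
  have := BD (BD Bxt Bzt) BK; congr mB.
  rewrite hx; ring.
- right; have [? ?] := nB _ _ t ycov (negbT Byt); have [? ?] := nB _ _ t zcov (negbT Bzt).
  by split.
Qed.


Lemma AN x : mA x -> mA (- x).
Proof. by move=> h; have := AB A0 h; rewrite sub0r. Qed.
Lemma BN x : mB x -> mB (- x).
Proof. by move=> h; have := BB B0 h; rewrite sub0r. Qed.

Lemma CrossN g r : Cross g r -> Cross (fun t => - g t) (- r).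
Proof.
move=> [cov inj [t1 [t2 [n12 e1 e2]]] sB sA]; split.
- move=> t; have e : - g t - - r = - (g t - r) by ring.
  rewrite e; have := cov t.
  by case/orP => h; apply/orP; [left; apply: AN | right; apply: BN].
- by move=> t t' ne /oppr_inj e; rewrite (inj _ _ ne e).
- by exists t1, t2; rewrite e1 e2.
- apply: leq_trans sB _; apply: subset_leq_card; apply/subsetP => t.
  have e : - g t - - r = - (g t - r) by ring.
  rewrite !inE eqr_opp e => /andP[-> h] /=; exact: BN.
- apply: leq_trans sA _; apply: subset_leq_card; apply/subsetP => t.
  have e : - g t - - r = - (g t - r) by ring.
  rewrite !inE eqr_opp e => /andP[-> h] /=; exact: AN.
Qed.

End Comb.

Lemma Cross_swap (V : comNzRingType) (I : finType) (mA mB : pred V) g r :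
  Cross mA mB g r -> @Cross V I mB mA g r.
Proof. by move=> [cov inj two sB sA]; split => // t; rewrite orbC. Qed.

Lemma final (V : comNzRingType) (I : finType) (mA mB : pred V)
  (A0 : mA 0) (AB : forall x y, mA x -> mA y -> mA (x - y))
  (B0 : mB 0) (BB : forall x y, mB x -> mB y -> mB (x - y))
  (crt : forall x, mA x -> mB x -> x = 0)
  (x y z : I -> V) rx ry rz :
  (forall t, x t = y t - z t) -> Cross mA mB x rx -> Cross mA mB y ry ->
  Cross mA mB z rz ->
  forall t, x t != rx -> mB (x t - rx) -> mB (z t - rz).
Proof.
move=> hx cx cy cz t nxt Bxt.
have [/andP[_ ->] //|[nyt Ayt nzt Azt]] := key AB B0 BB crt hx cx cy cz nxt Bxt.
have hy u : y u = x u - (fun u => - z u) u by rewrite /= hx; ring.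
have crt' w : mB w -> mA w -> w = 0 by move=> hb ha; exact: crt.
have := key BB A0 AB crt' hy (Cross_swap cy) (Cross_swap cx)
  (Cross_swap (CrossN A0 AB B0 BB cz)) nyt Ayt.
case=> [/andP[Axt _]|[_ _ _ h]].
  by exfalso; move: nxt; rewrite (eqAB crt Axt Bxt) eqxx.
by have := BN B0 BB h; congr mB; ring.
Qed.


End CombM.
Import CombM.

Module BrM.

Lemma dvdn_modE d m a : (d %| m)%N -> (d %| a %% m)%N = (d %| a)%N.
Proof. by move=> dm; rewrite /dvdn modn_dvdm. Qed.

Lemma natfact d N X : (d %| X)%N -> (X < N)%N ->
  X = (d %% N * (X %/ d %% N)) %% N.
Proof.
by move=> dX lt; rewrite modnMml modnMmr mulnC divnK // modn_small.
Qed.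

Lemma natfact2 d N D Y : (d %| N)%N ->
  (d %| D)%N = ((D + Y) %% N == Y %[mod d]).
Proof.
move=> dN; rewrite modn_dvdm // -{2}(add0n Y) eqn_modDr mod0n.
by rewrite /dvdn.
Qed.

Section Bridge.
Variables p q : nat.
Hypothesis n_gt1 : (1 < p * q)%N.

Lemma valZD (x y : 'Z_(p * q)) : val (x + y)%R = (val x + val y) %% (p * q).
Proof. by rewrite /=; congr (_ %% _); rewrite Zp_cast. Qed.

Lemma valZM (x y : 'Z_(p * q)) : val (x * y)%R = (val x * val y) %% (p * q).
Proof. by rewrite /=; congr (_ %% _); rewrite Zp_cast. Qed.

Lemma valZnat d : val (d%:R : 'Z_(p * q))%R = d %% (p * q).
Proof. exact: val_Zp_nat n_gt1 d. Qed.

Lemma ltZ (x : 'Z_(p * q)) : (val x < p * q)%N.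
Proof. by apply: leq_trans (ltn_ord x) _; rewrite Zp_cast. Qed.

Lemma valZin k : val (inZp k : 'Z_(p * q)) = k %% (p * q).
Proof. by rewrite /=; congr (_ %% _); rewrite Zp_cast. Qed.

Lemma multE d (x : 'Z_(p * q)) : (d %| p * q)%N -> multiple_of d x = (d %| val x)%N.
Proof.
move=> dn; apply/existsP/idP => [[y /eqP ->]|dx].
  rewrite valZM valZnat (dvdn_modE _ dn) dvdn_mulr //.
  by rewrite (dvdn_modE _ dn) dvdnn.
have ltx := ltZ x.
exists (inZp (val x %/ d)); apply/eqP; apply: val_inj.
rewrite valZM valZnat valZin; exact: natfact.
Qed.

Lemma multB d (x y : 'Z_(p * q)) : (d %| p * q)%N ->
  multiple_of d (x - y)%R = (val x == val y %[mod d]).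
Proof.
move=> dn; rewrite multE //.
have e : val x = (val (x - y)%R + val y) %% (p * q).
  by rewrite -valZD subrK.
rewrite e; exact: natfact2.
Qed.

Lemma mult0 d : multiple_of d (0 : 'Z_(p * q))%R.
Proof. by apply/existsP; exists 0%R; rewrite mulr0. Qed.

Lemma multBB d (x y : 'Z_(p * q)) : multiple_of d x -> multiple_of d y ->
  multiple_of d (x - y)%R.
Proof.
move=> /existsP[a /eqP ->] /existsP[b /eqP ->]; apply/existsP; exists (a - b)%R.
by rewrite mulrBr.
Qed.

Lemma multCRT (x : 'Z_(p * q)) : coprime p q ->
  multiple_of p x -> multiple_of q x -> x = 0%R.
Proof.
move=> cpq; rewrite (multE _ (dvdn_mulr _ (dvdnn p))) (multE _ (dvdn_mull _ (dvdnn q))).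
move=> hp hq.
have hd : (p * q %| val x)%N by rewrite Gauss_dvd // hp hq.
have ltx := ltZ x.
apply: val_inj => /=.
case: (posnP (val x)) => // xp.
by have := dvdn_leq xp hd; rewrite leqNgt ltx.
Qed.
End Bridge.

End BrM.
Import BrM.

Module CntM.

Lemma card_set_sum (I : finType) (P : pred I) :
  #|[set t | P t]| = \sum_t (if P t then 1 else 0).
Proof. by rewrite -sum1_card big_mkcond; apply: eq_bigr => t _; rewrite inE. Qed.

Lemma fiber_sum (I : finType) (f : I -> nat) m : (forall t, f t < m) ->
  \sum_(v < m) #|[set t | f t == v]| = #|I|.
Proof.
move=> lt.
under eq_bigr => v _ do rewrite (card_set_sum (fun t => f t == v)).
rewrite exchange_big /= -sum1_card; apply: eq_bigr => t _.
rewrite (bigD1 (Ordinal (lt t))) //= eqxx big1 // => v /negbTE nv.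
case: eqP => // e; move: nv; suff -> : v == Ordinal (lt t) by [].
by apply/eqP/val_inj.
Qed.

(* from sum of (1 + p * k v) = p + q get the unique big one *)
Lemma unique_big p q (X : nat -> nat) : 0 < p ->
  (forall v, v < q -> X v = 1 %[mod p] /\ 0 < X v) ->
  \sum_(v < q) X v = p + q ->
  exists2 v0, v0 < q & X v0 = p.+1 /\ forall v, v < q -> v != v0 -> X v = 1.
Proof.
move=> p0 hX hs.
have dec v : v < q -> X v = 1 + p * ((X v - 1) %/ p).
  move=> vq; have [h1 h2] := hX v vq.
  have : p %| X v - 1 by rewrite -eqn_mod_dvd // h1.
  move/divnK => e; rewrite mulnC e; lia.
have hs2 : \sum_(v < q) ((X v - 1) %/ p) = 1.
  have : \sum_(v < q) X v = \sum_(v < q) (1 + p * ((X v - 1) %/ p)).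
    by apply: eq_bigr => v _; apply: dec.
  rewrite big_split /= -big_distrr /= sum1_card card_ord hs => h.
  move: h; set S := \sum_(i < q) _ => h.
  have : p * 1 = p * S by rewrite muln1; apply/eqP; rewrite -(eqn_add2r q) h addnC.
  by move/eqP; rewrite eqn_pmul2l // => /eqP <-.
have [v0 _ nz] : exists2 v0 : 'I_q, true & (X v0 - 1) %/ p != 0.
  apply/exists_inP; apply: contraT; rewrite negb_exists_in => /forall_inP h.
  rewrite big1 in hs2 => // v _; by apply/eqP; rewrite -[_ == 0]negbK h.
move: hs2 nz; rewrite (bigD1 v0) //= -lt0n => hs2 nz.
have k1 : (X v0 - 1) %/ p = 1 by lia.
move: hs2; set S := bigop _ _ _ => hs2.
have rest : S = 0 by lia.
rewrite /S in rest.
exists v0 => //; split; first by rewrite (dec _ (ltn_ord v0)) k1; lia.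
move=> v vq nv; rewrite (dec _ vq).
have : (X (Ordinal vq) - 1) %/ p = 0.
  move/eqP: rest; rewrite sum_nat_eq0 => /forallP /(_ (Ordinal vq)).
  by rewrite /= -(inj_eq val_inj) /= nv => /implyP /(_ isT) /eqP.
by move=> /= ->; lia.
Qed.

Lemma ar1 n A p q : A + (p + q) = q * 1 + p * 1 -> n * 1 <= A -> 0 < n -> False.
Proof. lia. Qed.
Lemma ar2 n A B p q : n = p * q -> A + (p + q) = q * 1 + B -> n * 2 <= A ->
  B <= p * q.+1 -> 0 < n -> False.
Proof. lia. Qed.
Lemma ar3 n A B p q : n = p * q -> A + (p + q) = B + p * 1 -> n * 2 <= A ->
  B <= q * p.+1 -> 0 < n -> False.
Proof. lia. Qed.
Lemma ar4 x y p : y + x = p.+1 -> y = 2 -> x = p.-1.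
Proof. lia. Qed.

Lemma counting (I : finType) (e : I -> nat) p q :
  prime p -> prime q -> p != q -> #|I| = p + q ->
  (forall t, e t < p * q) ->
  (forall v, v < p * q -> p * q * #|[set t | e t == v]| + (p + q) =
       q * #|[set t | e t == v %[mod q]]| + p * #|[set t | e t == v %[mod p]]|) ->
  exists2 r, r < p * q & [/\
    forall t, (e t == r %[mod p]) || (e t == r %[mod q]),
    forall t t', t != t' -> e t = e t' -> e t = r,
    exists t1 t2, [/\ t1 != t2, e t1 = r & e t2 = r],
    #|[set t | (e t != r) && (e t == r %[mod q])]| = p.-1 &
    #|[set t | (e t != r) && (e t == r %[mod p])]| = q.-1].
Proof.
move=> pp pq npq cI elt heq.
have cpq : coprime p q by rewrite prime_coprime // dvdn_prime2 //.
have cqp : coprime q p by rewrite coprime_sym.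
have p0 := prime_gt0 pp; have q0 := prime_gt0 pq.
have p1 := prime_gt1 pp; have q1 := prime_gt1 pq.
set n := p * q in elt heq *.
have n0 : 0 < n by rewrite muln_gt0 p0.
pose X v := #|[set t | e t == v %[mod q]]|.
pose Y v := #|[set t | e t == v %[mod p]]|.
pose c v := #|[set t | e t == v]|.
have heq' v : v < n -> n * c v + (p + q) = q * X v + p * Y v by apply: heq.
have gen (a b : nat) (ca : coprime a b) (a1 : 1 < a) (Z W : nat -> nat) :
    (forall v, v < n -> a * (b * c v + 1) + b = b * Z v + a * W v) ->
    forall v, v < n -> Z v = 1 %[mod a] /\ 0 < Z v.
  move=> h v vn; have hv := h v vn.
  have m : (b * Z v) %% a = b %% a.
    move: (congr1 (modn^~ a) hv) => /=.
    by rewrite [a * _]mulnC modnMDl [in RHS]addnC [a * W v]mulnC modnMDl => ->.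
  have Zp : 0 < Z v.
    rewrite lt0n; apply/negP => /eqP Z0; move: m; rewrite Z0 muln0 mod0n => /esym/eqP.
    rewrite -/(dvdn a b) => ab'.
    by move: ca; rewrite /coprime (gcdn_idPl ab') => /eqP a1'; rewrite a1' in a1.
  split => //; apply/eqP; rewrite eqn_mod_dvd //.
  rewrite -(Gauss_dvdr _ (_ : coprime a b)) // mulnBr muln1 -eqn_mod_dvd; first by apply/eqP.
  by rewrite leq_pmulr.
have hX : forall v, v < n -> X v = 1 %[mod p] /\ 0 < X v.
  by apply: (gen p q cpq p1 X Y) => v vn; have := heq' v vn; rewrite /n => h; lia.
have hY : forall v, v < n -> Y v = 1 %[mod q] /\ 0 < Y v.
  by apply: (gen q p cqp q1 Y X) => v vn; have := heq' v vn; rewrite /n => h; lia.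
have qn : q <= n by rewrite /n leq_pmull.
have pn : p <= n by rewrite /n leq_pmulr.
have sumX : \sum_(v < q) X v = p + q.
  rewrite -cI -(@fiber_sum _ (fun t => e t %% q) q) => [|t]; last by rewrite ltn_pmod.
  by apply: eq_bigr => v _; rewrite /X (modn_small (ltn_ord v)).
have sumY : \sum_(v < p) Y v = q + p.
  rewrite addnC -cI -(@fiber_sum _ (fun t => e t %% p) p) => [|t]; last by rewrite ltn_pmod.
  by apply: eq_bigr => v _; rewrite /Y (modn_small (ltn_ord v)).
have [v0 v0q [Xv0 Xo]] := unique_big p0 (fun v vq => hX v (leq_trans vq qn)) sumX.
have [w0 w0p [Yw0 Yo]] := unique_big q0 (fun v vq => hY v (leq_trans vq pn)) sumY.
have Xm v : X v = X (v %% q) by rewrite /X modn_mod.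
have Ym v : Y v = Y (v %% p) by rewrite /Y modn_mod.
have Xc v : v %% q != v0 -> X v = 1 by move=> h; rewrite Xm Xo // ltn_pmod.
have Yc v : v %% p != w0 -> Y v = 1 by move=> h; rewrite Ym Yo // ltn_pmod.
have Xle v : X v <= p.+1 by case: (eqVneq (v %% q) v0) => h; rewrite Xm ?h ?Xv0 // -Xm Xc.
have Yle v : Y v <= q.+1 by case: (eqVneq (v %% p) w0) => h; rewrite Ym ?h ?Yw0 // -Ym Yc.
pose r := chinese q p v0 w0 %% n.
have rn : r < n by rewrite ltn_pmod.
have rq : r %% q = v0.
  by rewrite modn_dvdm ?dvdn_mull // chinese_modl // modn_small.
have rp : r %% p = w0.
  by rewrite modn_dvdm ?dvdn_mulr // chinese_modr // modn_small.
have Xr : X r = p.+1 by rewrite Xm rq.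
have Yr : Y r = q.+1 by rewrite Ym rp.
have cr : c r = 2.
  have := heq' r rn; rewrite Xr Yr => h.
  have : n * c r = n * 2 by rewrite /n in h *; lia.
  by move/eqP; rewrite eqn_pmul2l // => /eqP.
have eqr v : v < n -> v %% q = v0 -> v %% p = w0 -> v = r.
  move=> vn h1 h2; rewrite -(modn_small vn) -(modn_small rn).
  apply/eqP; rewrite /n chinese_remainder //.
  by rewrite h1 h2 rp rq !eqxx.
exists r => //; split.
- move=> t; set v := e t.
  have c1 : 0 < c v by apply/card_gt0P; exists t; rewrite inE.
  have h := heq' v (elt t).
  case: (eqVneq (v %% q) v0) => hq; first by rewrite hq rq eqxx orbT.
  case: (eqVneq (v %% p) w0) => hp; first by rewrite hp rp eqxx.
  rewrite (Xc _ hq) (Yc _ hp) in h.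
  by case: (ar1 h (leq_mul (leqnn n) c1) n0).
- move=> t t' ne ee; set v := e t.
  have c2 : 1 < c v by apply/card_gt1P; exists t, t'; rewrite !inE /v -ee eqxx.
  have h := heq' v (elt t).
  have hm := leq_mul (leqnn n) c2.
  have vq : v %% q = v0.
    apply/eqP; apply: contraT => hq; rewrite (Xc _ hq) in h.
    by case: (ar2 (erefl n) h hm (leq_mul (leqnn p) (Yle v)) n0).
  have vp : v %% p = w0.
    apply/eqP; apply: contraT => hp; rewrite (Yc _ hp) in h.
    by case: (ar3 (erefl n) h hm (leq_mul (leqnn q) (Xle v)) n0).
  exact: eqr (elt t) vq vp.
- have : 1 < c r by rewrite cr.
  by move/card_gt1P => [t1 [t2 [h1 h2 h3]]]; exists t1, t2; move: h1 h2; rewrite !inE => /eqP -> /eqP ->.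
- have := cardsID [set t | e t == r] [set t | e t == r %[mod q]].
  have -> : [set t | e t == r %[mod q]] :&: [set t | e t == r] = [set t | e t == r].
    by apply/setP => t; rewrite !inE; case: (eqVneq (e t) r) => [->|_]; rewrite ?eqxx ?andbF.
  have -> : [set t | e t == r %[mod q]] :\: [set t | e t == r] = [set t | (e t != r) && (e t == r %[mod q])].
    by apply/setP => t; rewrite !inE.
  rewrite -/(c r) -/(X r) Xr => h; exact: ar4 h cr.
- have := cardsID [set t | e t == r] [set t | e t == r %[mod p]].
  have -> : [set t | e t == r %[mod p]] :&: [set t | e t == r] = [set t | e t == r].
    by apply/setP => t; rewrite !inE; case: (eqVneq (e t) r) => [->|_]; rewrite ?eqxx ?andbF.
  have -> : [set t | e t == r %[mod p]] :\: [set t | e t == r] = [set t | (e t != r) && (e t == r %[mod p])].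
    by apply/setP => t; rewrite !inE.
  rewrite -/(c r) -/(Y r) Yr => h; exact: ar4 h cr.
Qed.

End CntM.
Import CntM.

Module CasesM.

Lemma prime_dvd_eq l d : prime l -> (d %| l) -> d = 1 \/ d = l.
Proof. by move=> /primeP[_ h] /h /orP[] /eqP; [left|right]. Qed.

Lemma dvd_pq_cases p q d : prime p -> prime q -> p != q -> d %| p * q ->
  [\/ d = 1, d = p, d = q | d = p * q].
Proof.
move=> pp pq npq dn.
have cpq : coprime p q by rewrite prime_coprime // dvdn_prime2.
case: (boolP (p %| d)) => pd; case: (boolP (q %| d)) => qd.
- by constructor 4; apply/eqP; rewrite eqn_dvd dn (Gauss_dvd _ cpq) pd qd.
- have cdq : coprime d q by rewrite coprime_sym (prime_coprime _ pq) qd.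
  have : d %| p by rewrite -(Gauss_dvdl _ cdq).
  case/(prime_dvd_eq pp) => [->|->]; [by constructor 1 | by constructor 2].
- have cdp : coprime d p by rewrite coprime_sym (prime_coprime _ pp) pd.
  have : d %| q by rewrite -(Gauss_dvdr _ cdp).
  case/(prime_dvd_eq pq) => [->|->]; [by constructor 1 | by constructor 3].
- have cdp : coprime d p by rewrite coprime_sym (prime_coprime _ pp) pd.
  have : d %| q by rewrite -(Gauss_dvdr _ cdp).
  case/(prime_dvd_eq pq) => [->|e]; first by constructor 1.
  by rewrite e dvdnn in qd.
Qed.

End CasesM.
Import CasesM.

Module AlgM.
Local Open Scope ring_scope.

Lemma geom (x : algC) m : x ^+ m = 1 ->
  \sum_(i < m) x ^+ i = if x == 1 then m%:R else 0.
Proof.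
case: eqP => [->|/eqP ne] h.
  by under eq_bigr do rewrite expr1n; rewrite sumr_const card_ord.
have := subrX1 x m; rewrite h subrr => /esym/eqP.
by rewrite mulf_eq0 subr_eq0 (negbTE ne) /= => /eqP.
Qed.

Section Alg.
Variables (I : finType) (e : I -> nat).

Lemma fourier (z : algC) d (pz : d.-primitive_root z) u :
  \sum_(s < d) \sum_t z ^+ (s * (e t + u)) =
    d%:R * #|[set t | (d %| e t + u)%N]|%:R.
Proof.
rewrite exchange_big /=.
have -> : #|[set t | (d %| e t + u)%N]| = (\sum_t (if (d %| e t + u)%N then 1 else 0))%N.
  by rewrite -sum1_card big_mkcond; apply: eq_bigr => t _; rewrite inE.
rewrite natr_sum mulr_sumr; apply: eq_bigr => t _.
under eq_bigr => s _ do rewrite mulnC exprM.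
rewrite geom; last by rewrite -exprM mulnC exprM (prim_expr_order pz) expr1n.
rewrite -(prim_order_dvd pz); case: ifP => _; by rewrite ?mulr1 ?mulr0.
Qed.

Lemma galois (z : algC) d (pz : d.-primitive_root z) :
  \sum_t z ^+ e t = 0 -> forall s, coprime s d -> \sum_t z ^+ (s * e t) = 0.
Proof.
move=> h0 s cs.
pose f : {poly rat} := \sum_t 'X^(e t).
have mf : map_poly ratr f = \sum_t 'X^(e t) :> {poly algC}.
  by rewrite rmorph_sum; apply: eq_bigr => t _; rewrite rmorphXn /= map_polyX.
have [p0 [Dp0 _] dvP] := minCpolyP z.
have rf : root (map_poly ratr f) z by rewrite mf /root horner_sum;
  under eq_bigr do rewrite hornerXn; rewrite h0.
have dv : (p0 %| f)%R by rewrite -dvP.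
have rz : root (map_poly ratr p0) (z ^+ s).
  by rewrite -Dp0 (minCpoly_cyclotomic pz) (root_cyclotomic pz) prim_root_exp_coprime.
have := root_dvdp (_ : map_poly ratr p0 %| map_poly ratr f) rz.
rewrite dvdp_map mf /root horner_sum => /(_ dv) /eqP h; rewrite -[RHS]h.
by apply: eq_bigr => t _; rewrite hornerXn -exprM.
Qed.

End Alg.
Lemma sum_mult_nat (F : nat -> algC) p m : (0 < p)%N ->
  \sum_(0 <= s < p * m) (if (p %| s)%N then F s else 0) = \sum_(0 <= s < m) F (p * s)%N.
Proof.
move=> p0; elim: m => [|m IH]; first by rewrite muln0 !big_geq.
rewrite big_nat_recr //= -IH mulnS addnC.
rewrite (big_cat_nat _ (leq_addr p (p * m))) //=; congr (_ + _).
rewrite (big_addn 0 _ (p * m)) addKn big_ltn //= add0n dvdn_mulr // big1_seq ?addr0 // => i.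
rewrite mem_index_iota => /and3P[_ i1 ip].
rewrite (dvdn_addl _ (dvdn_mulr _ (dvdnn p))).
case: ifP => // pi; have := dvdn_leq i1 pi; by rewrite leqNgt ip.
Qed.

Lemma sum_mult (F : nat -> algC) p m : (0 < p)%N ->
  \sum_(s < p * m) (if (p %| s)%N then F s else 0) = \sum_(s < m) F (p * s)%N.
Proof. by move=> p0; have := sum_mult_nat F m p0; rewrite !big_mkord. Qed.

Lemma split_sum (G : nat -> algC) p q : prime p -> prime q -> p != q ->
  (forall s, (s < p * q)%N -> coprime s (p * q) -> G s = 0) ->
  \sum_(s < p * q) G s = \sum_(s < q) G (p * s)%N + \sum_(s < p) G (q * s)%N - G 0%N.
Proof.
move=> pp pq npq hG.
have p0 := prime_gt0 pp; have q0 := prime_gt0 pq.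
rewrite -(@sum_mult G p q p0) -(@sum_mult G q p q0) [(q * p)%N]mulnC.
have -> : G 0%N = \sum_(s < p * q) (if s == 0%N :> nat then G s else 0).
  have n0 : (0 < p * q)%N by rewrite muln_gt0 p0 q0.
  rewrite -big_mkcond (big_pred1 (Ordinal n0)) //.
rewrite -big_split -sumrB; apply: eq_bigr => s _.
have sn := ltn_ord s.
case: (boolP (p %| s)%N) => ps; case: (boolP (q %| s)%N) => qs.
- have s0 : (s == 0 :> nat).
    have : (p * q %| s)%N by rewrite Gauss_dvd ?ps ?qs // prime_coprime // dvdn_prime2.
    case: (posnP s) => [->//|spos] /(dvdn_leq spos); by rewrite leqNgt sn.
  by rewrite s0 /= addrK.
- have s0 : (s == 0 :> nat) = false by apply: contraNF qs => /eqP ->.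
  by rewrite s0 /= subr0 addr0.
- have s0 : (s == 0 :> nat) = false by apply: contraNF ps => /eqP ->.
  by rewrite s0 /= subr0 add0r.
- have s0 : (s == 0 :> nat) = false by apply: contraNF ps => /eqP ->.
  rewrite s0 /= subr0 addr0 hG //.
  by rewrite coprimeMr !(coprime_sym s) !prime_coprime // ps qs.
Qed.

Lemma natfact2 d N D Y : (d %| N)%N ->
  (d %| D)%N = ((D + Y) %% N == Y %[mod d]).
Proof.
move=> dN; rewrite modn_dvdm // -{2}(add0n Y) eqn_modDr mod0n.
by rewrite /dvdn.
Qed.

Lemma divshift d n a v : (d %| n)%N -> (a < n)%N -> (v < n)%N ->
  (d %| a + (n - v))%N = (a == v %[mod d]).
Proof.
move=> dn an vn.
have e : ((a + (n - v) + v) %% n = a)%N.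
  by rewrite -addnA subnK ?(ltnW vn) // modnDr modn_small.
by rewrite (natfact2 (a + (n - v)) v dn) e.
Qed.

Lemma pq_identity (I : finType) (e : I -> nat) p q (z : algC) :
  prime p -> prime q -> p != q -> #|I| = (p + q)%N ->
  (p * q).-primitive_root z ->
  (forall t, e t < p * q)%N -> \sum_t z ^+ e t = 0 ->
  forall v, (v < p * q)%N -> (p * q * #|[set t | e t == v]| + (p + q) =
       q * #|[set t | e t == v %[mod q]]| + p * #|[set t | e t == v %[mod p]]|)%N.
Proof.
move=> pp pq npq cI pz elt h0 v vn.
have p0 := prime_gt0 pp; have q0 := prime_gt0 pq.
set n := (p * q)%N in pz elt vn *.
pose u := (n - v)%N.
pose G s := \sum_t z ^+ (s * (e t + u)).
have hG s : (s < n)%N -> coprime s n -> G s = 0.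
  move=> _ cs; rewrite /G.
  under eq_bigr do rewrite mulnDr exprD.
  by rewrite -mulr_suml (galois pz h0 cs) mul0r.
have H1 : \sum_(s < n) G s = n%:R * #|[set t | e t == v]|%:R.
  rewrite (fourier e pz u); congr (_ * _%:R); apply: eq_card => t.
  by rewrite !inE (divshift (dvdnn n) (elt t) vn) !modn_small.
have prp : q.-primitive_root (z ^+ p).
  have := exp_prim_root pz p; rewrite /n.
  by rewrite (gcdn_idPl (dvdn_mulr _ (dvdnn p))) mulKn.
have prq : p.-primitive_root (z ^+ q).
  have := exp_prim_root pz q; rewrite /n.
  by rewrite (gcdn_idPl (dvdn_mull _ (dvdnn q))) mulnK.
have H2 : \sum_(s < q) G (p * s)%N = q%:R * #|[set t | e t == v %[mod q]]|%:R.
  have -> : #|[set t | e t == v %[mod q]]| = #|[set t | (q %| e t + u)%N]|.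
    apply: eq_card => t; rewrite !inE (divshift _ (elt t) vn) // /n dvdn_mull //.
  rewrite -(fourier e prp u); apply: eq_bigr => s _; apply: eq_bigr => t _.
  by rewrite -mulnA exprM.
have H3 : \sum_(s < p) G (q * s)%N = p%:R * #|[set t | e t == v %[mod p]]|%:R.
  have -> : #|[set t | e t == v %[mod p]]| = #|[set t | (p %| e t + u)%N]|.
    apply: eq_card => t; rewrite !inE (divshift _ (elt t) vn) // /n dvdn_mulr //.
  rewrite -(fourier e prq u); apply: eq_bigr => s _; apply: eq_bigr => t _.
  by rewrite -mulnA exprM.
have G0 : G 0%N = (p + q)%:R.
  rewrite /G; under eq_bigr do rewrite mul0n expr0.
  by rewrite sumr_const cI.
have := split_sum pp pq npq hG; rewrite H1 H2 H3 G0 => h.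
apply/eqP; rewrite -(eqr_nat algC) natrD natrM h subrK natrD !natrM.
by [].
Qed.

Lemma prime_case (I : finType) (e : I -> nat) l (z : algC) :
  l.-primitive_root z -> prime l -> \sum_t z ^+ e t = 0 -> (l %| #|I|)%N.
Proof.
case: l => [|l] pz pl h0; first by [].
have := fourier e pz 0; rewrite big_ord_recl /=.
have -> : \sum_t z ^+ (0 * (e t + 0)) = #|I|%:R.
  by under eq_bigr do rewrite mul0n expr0; rewrite sumr_const.
rewrite big1 ?add0r => [/eqP|s _].
    rewrite addr0 -natrM (eqr_nat algC) => /eqP ->; exact: dvdn_mulr.
have cs : coprime (bump 0 s) l.+1.
  rewrite coprime_sym prime_coprime //; apply/negP => /(dvdn_leq (ltn0Sn _)).
  move=> h; suff : (bump 0 s < l.+1)%N by rewrite ltnNge h.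
  by rewrite /bump leq0n add1n ltnS ltn_ord.
rewrite -[RHS](galois pz h0 cs); apply: eq_bigr => t _; by rewrite addn0.
Qed.

Lemma zeta_props n : (0 < n)%N -> zeta n ^+ n = 1 /\ zeta n * (zeta n)^* = 1.
Proof.
move=> n0; have wn : (n.-root (-1 : algC)) ^+ n = -1 by rewrite rootCK.
have zn : zeta n ^+ n = 1 by rewrite /zeta exprAC wn sqrrN expr1n.
split => //.
have h0 : 0 <= zeta n * (zeta n)^* by rewrite -normCK exprn_ge0.
apply/eqP; rewrite -(pexpr_eq1 n0 h0) exprMn -rmorphXn zn rmorph1 mulr1 //.
Qed.

End AlgM.
Import AlgM.

Module MainM.

Section MainS.
Local Open Scope ring_scope.

Lemma term_eq n (a b : 'Z_n) : (1 < n)%N ->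
  zeta n ^+ b * (zeta n ^+ a)^* = zeta n ^+ val (b - a).
Proof.
move=> n1; have n0 : (0 < n)%N by apply: ltnW.
have [zn zc] := zeta_props n0.
have eb : (b : nat) = ((val (b - a)%R + val a) %% n)%N.
  rewrite -[in LHS](subrK a b) /=; exact: (congr1 (modn _) (Zp_cast n1)).
by rewrite eb (expr_mod _ zn) exprD -mulrA rmorphXn -exprMn zc expr1n mulr1.
Qed.

Lemma cross_pair p q (hp : prime p) (hq : prime q) (hpq : p != q)
  (hp5 : (5 <= p)%N) (hq5 : (5 <= q)%N) (M : 'M['Z_(p * q)]_(p + q))
  (pn : (p * q).-primitive_root (zeta (p * q)))
  a b (hS : \sum_t zeta (p * q) ^+ val (Ldiff M a b t) = 0) :
  exists R, Cross (multiple_of p) (multiple_of q) (Ldiff M a b) R.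
Proof.
have n1 : (1 < p * q)%N by rewrite (leq_trans _ (leq_pmulr _ (prime_gt0 hq))) ?prime_gt1.
pose e t := val (Ldiff M a b t).
have cI : #|'I_(p + q)| = (p + q)%N by rewrite card_ord.
have elt t : (e t < p * q)%N by apply: ltZ.
have heq := pq_identity hp hq hpq cI pn elt hS.
have [r rn [cov inj [t1 [t2 [n12 e1 e2]]] sq sp]] := counting hp hq hpq cI elt heq.
pose R : 'Z_(p * q) := inZp r.
have vR : val R = r by rewrite valZin // modn_small.
have gR t : (Ldiff M a b t == R) = (e t == r) by rewrite -vR (inj_eq val_inj).
have dp : (p %| p * q)%N by apply: dvdn_mulr.
have dq : (q %| p * q)%N by apply: dvdn_mull.
exists R; split.
- move=> t.
  have E1 : multiple_of p (Ldiff M a b t - R) = (e t == r %[mod p]) by rewrite (multB n1 _ _ dp) vR.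
  have E2 : multiple_of q (Ldiff M a b t - R) = (e t == r %[mod q]) by rewrite (multB n1 _ _ dq) vR.
  by move: (cov t); rewrite -E1 -E2.
- move=> t t' ne ee; apply/eqP; rewrite gR; apply/eqP; apply: inj ne _.
  by rewrite /e ee.
- by exists t1, t2; split => //; apply/eqP; rewrite gR; apply/eqP.
- rewrite /PB; have -> : #|[set t | (Ldiff M a b t != R) && multiple_of q (Ldiff M a b t - R)]|
     = #|[set t | (e t != r) && (e t == r %[mod q])]|.
    by apply: eq_card => t; rewrite !inE gR (multB n1 _ _ dq) vR.
  rewrite sq; lia.
- rewrite /PA; have -> : #|[set t | (Ldiff M a b t != R) && multiple_of p (Ldiff M a b t - R)]|
     = #|[set t | (e t != r) && (e t == r %[mod p])]|.
    by apply: eq_card => t; rewrite !inE gR (multB n1 _ _ dp) vR.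
  rewrite sp; lia.
Qed.
End MainS.

Section MainT.
Local Open Scope ring_scope.

Lemma RsetE p q (M : 'M['Z_(p * q)]_(p + q)) a b R :
  Cross (multiple_of p) (multiple_of q) (Ldiff M a b) R ->
  Rset M a b = [set t | Ldiff M a b t == R].
Proof.
move=> [_ inj [t1 [t2 [n12 e1 e2]]] _ _]; apply/setP => k; rewrite !inE.
apply/existsP/eqP.
  by move=> [k' /andP[nk /eqP ee]]; rewrite -ee; apply: inj nk ee.
move=> ek; case: (eqVneq k t1) => [-> | nk1].
  by exists t2; rewrite e1 e2 eqxx eq_sym n12.
by exists t1; rewrite e1 ek eqxx andbT eq_sym.
Qed.

Lemma PsetE p q (M : 'M['Z_(p * q)]_(p + q)) a b R :
  Cross (multiple_of p) (multiple_of q) (Ldiff M a b) R ->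
  Pset M a b = [set t | (Ldiff M a b t != R) && multiple_of q (Ldiff M a b t - R)].
Proof.
move=> c; have RE := RsetE c; have [_ _ [t1 [_ [_ e1 _]]] _ _] := c.
apply/setP => k; rewrite /Pset RE !inE; congr (_ && _).
apply/exists_inP/idP => [[k0] | m].
  by rewrite inE => /eqP ->.
by exists t1; rewrite ?inE e1.
Qed.

Lemma QsetE p q (M : 'M['Z_(p * q)]_(p + q)) a b R :
  Cross (multiple_of p) (multiple_of q) (Ldiff M a b) R ->
  Qset M a b = [set t | (Ldiff M a b t != R) && multiple_of p (Ldiff M a b t - R)].
Proof.
move=> c; have RE := RsetE c; have [_ _ [t1 [_ [_ e1 _]]] _ _] := c.
apply/setP => k; rewrite /Qset RE !inE; congr (_ && _).
apply/exists_inP/idP => [[k0] | m].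
  by rewrite inE => /eqP ->.
by exists t1; rewrite ?inE e1.
Qed.

End MainT.


End MainM.
Import MainM.

Unset Implicit Arguments. Set Strict Implicit. Set Printing Implicit Defensive.

Theorem corollary6p7 (p q : nat) (hp : prime p) (hq : prime q) (hpq : p != q)
  (hp5 : 5 <= p) (hq5 : 5 <= q) (M : 'M['Z_(p * q)]_(p + q))
  (hM : hadamard_exp M) (i j k : 'I_(p + q)) :
  i != j -> j != k -> i != k ->
  Pset M i j \subset Pplus M j k /\ Qset M i j \subset Qplus M j k.
Proof.
move=> nij njk nik.
have n1 : 1 < p * q by rewrite (leq_trans _ (leq_pmulr _ (prime_gt0 hq))) ?prime_gt1.
have n0 : 0 < p * q by apply: ltnW.
have [zn zc] := zeta_props n0.
have hS a b : a != b -> (\sum_t zeta (p * q) ^+ val (Ldiff M a b t) = 0)%R.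
  move=> ab; have hba : b != a by rewrite eq_sym.
  rewrite -[in RHS](hM b a hba); apply: eq_bigr => t _; by rewrite term_eq.
have cpq : coprime p q by rewrite prime_coprime // dvdn_prime2.
have [d pd dd] := prim_order_exists n0 zn.
have pn : ((p * q).-primitive_root (zeta (p * q)))%R.
  case: (dvd_pq_cases hp hq hpq dd) => ed; move: pd; rewrite ed => // pd.
  - have z1 : zeta (p * q) = 1%R by rewrite -[zeta _]expr1 (prim_expr_order pd).
    have := hS i j nij; rewrite z1; under eq_bigr do rewrite expr1n.
    rewrite sumr_const card_ord => /eqP; rewrite pnatr_eq0 addn_eq0 => /andP[/eqP p00 _].
    by rewrite p00 in hp.
  - have := prime_case pd hp (hS i j nij); rewrite card_ord (dvdn_addr _ (dvdnn p)).
    by rewrite dvdn_prime2 // (negbTE hpq).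
  - have := prime_case pd hq (hS i j nij); rewrite card_ord (dvdn_addl _ (dvdnn q)).
    by rewrite dvdn_prime2 // eq_sym (negbTE hpq).
have [rx cx] := cross_pair hp hq hpq hp5 hq5 pn (hS i j nij).
have [ry cy] := cross_pair hp hq hpq hp5 hq5 pn (hS i k nik).
have [rz cz] := cross_pair hp hq hpq hp5 hq5 pn (hS j k njk).
have hx t : Ldiff M i j t = (Ldiff M i k t - Ldiff M j k t)%R by rewrite /Ldiff; ring.
have A0 := mult0 p q p; have B0 := mult0 p q q.
have AB := @multBB p q p; have BB := @multBB p q q.
have crt : forall x : 'Z_(p * q), multiple_of p x -> multiple_of q x -> x = 0%R :=
  fun x h1 h2 => multCRT n1 cpq h1 h2.
have crt' : forall x : 'Z_(p * q), multiple_of q x -> multiple_of p x -> x = 0%R :=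
  fun x h1 h2 => multCRT n1 cpq h2 h1.
split; apply/subsetP => t.
- rewrite (PsetE cx) inE => /andP[nxt Bxt].
  have Bz := final A0 AB B0 BB crt hx cx cy cz nxt Bxt.
  rewrite /Pplus in_setU (PsetE cz) (RsetE cz) !inE Bz andbT.
  by case: (Ldiff M j k t == rz).
- rewrite (QsetE cx) inE => /andP[nxt Axt].
  have Az := final B0 BB A0 AB crt' hx (Cross_swap cx) (Cross_swap cy) (Cross_swap cz) nxt Axt.
  rewrite /Qplus in_setU (QsetE cz) (RsetE cz) !inE Az andbT.
  by case: (Ldiff M j k t == rz).
Qed.
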